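(* Let $(E,C)$ be a separated graph with $E^0,E^1$ countable, in which all edges have the same source $v_0$ and the range map is injective, let $S\subseteq C_{fin}$ and $K$ a field. Let $\pi:AL_K(E,C,S)\to\mathrm{Hom}_K(M)$ be the representation arising from a branching system obtained by the construction described in the context. Let $x\in AL_K(E,C,S)$ be a nonzero element of the form $$x=\gamma_0v_0+\sum_{j=1}^N\gamma_j\, e_1^j(e_1^j)^*e_2^j(e_2^j)^*\cdots e_{n_j}^j(e_{n_j}^j)^*,$$ where $\gamma_j\in K$ and the $e_i^j$ are edges. Then $\pi(x)\neq 0$.
   Context: A separated graph is a pair $(E,C)$ where $E=(E^0,E^1,r,s)$ is a directed graph and $C=\bigcup_{v\in E^0}C_v$, where for each non-sink $v$, $C_v$ is a partition of $s^{-1}(v)$ into pairwise disjoint nonempty sets; $C_{fin}$ is the set of finite $Y\in C$. The Cohn-Leavitt algebra $L_K(E,C,S)$ is the universal $K$-algebra generated by pairwise orthogonal idempotents $\{v:v\in E^0\}$ and elements $\{e,e^*:e\in E^1\}$ subject to: $s(e)e=er(e)=e$; $r(e)e^*=e^*s(e)=e^*$; $e^*f=\delta_{e,f}r(e)$ for $e,f\in Y$, $Y\in C$; $v=\sum_{e\in X}ee^*$ for every $X\in S\cap C_v$, $v$ non-sink. The abelianized Cohn-Leavitt algebra $AL_K(E,C,S)$ is the quotient of $L_K(E,C,S)$ by the ideal generated by all $\lambda\lambda^*\beta\beta^*-\beta\beta^*\lambda\lambda^*$ with $\lambda,\beta$ in the multiplicative semigroup generated by $E^1\cup(E^1)^*$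 (where $(a_1\cdots a_k)^*=a_k^*\cdots a_1^*$, $(e^* )^*=e$). Construction of the branching system: enumerate $E^0=\{w_0,w_1,\dots\}$ and put $D_{w_i}=[i,i+1)\subseteq\mathbb{R}$, $\mathfrak{X}=\bigcup_i D_{w_i}$. For each non-sink $v$ enumerate $C_v=\{Y_1,Y_2,\dots\}$ and let $\widetilde{Y_j}=Y_j\cup\{\text{one extra symbol}\}$ if $Y_j\notin S$ and $\widetilde{Y_j}=Y_j$ if $Y_j\in S$. Partition $D_v$ into $|\widetilde{Y_1}|$ left-closed right-open intervals indexed by $\widetilde{Y_1}$, and for $e\in Y_1$ let $R_e$ be the interval indexed by $e$. Inductively, given the (countable) partition of $D_v$ into left-closed right-open intervals obtained at stage $n$, partition each of its intervals into $|\widetilde{Y_{n+1}}|$ left-closed right-open intervals indexed by $\widetilde{Y_{n+1}}$, and for $e\in Y_{n+1}$ let $R_e$ be the union of all those subintervals indexed by $e$. For each $e\in E^1$, $R_e$ is a disjoint union of countably many left-closed right-open intervals $\{J_k\}_{k\in\Delta}$; partition $D_{r(e)}$ into $|\Delta|$ left-closed right-open intervals $\{D_k\}_{k\in\Delta}$, choose bijections $D_k\to J_k$ (e.g. linear), and let $f_e:D_{r(e)}\to R_e$ be the resulting bijection. $M$ is the $K$-module of all functions $\mathfrak{X}\to K$, and $\pi$ is the algebra homomorphism (well defined on $AL_K(E,C,S)$) determined by $\pi(v)\phi=\chi_{D_v}\phi$, $\pi(e)\phi=$ the function equal to $\phi(f_e^{-1}(x))$ on $R_e$ and $0$ elsewhere,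 $\pi(e^* )\phi=$ the function equal to $\phi(f_e(x))$ on $D_{r(e)}$ and $0$ elsewhere. *)

(* Defs.v *)
From Stdlib Require Import Reals ClassicalEpsilon.
From mathcomp Require Import all_boot all_order all_algebra.
Set Implicit Arguments. Unset Strict Implicit. Unset Printing Implicit Defensive.
Import GRing.Theory.
Local Open Scope ring_scope.

Definition pdec (P : Prop) : bool :=
  if excluded_middle_informative P then true else false.

Definition Ico (p : R * R) (x : R) : Prop := Rle (fst p) x /\ Rlt x (snd p).

Section FreeAlgebra.
Context (K : fieldType) (E0 E1 : countType).

(* generators of the (non-unital) free algebra: vertices v, edges e, ghosts e* *)
Definition gen := (E0 + (E1 + E1))%type.
Definition gV (v : E0) : gen := inl v.
Definition gE (e : E1) : gen := inr (inl e).
Definition gS (e : E1) : gen := inr (inr e).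

(* elements of the free K-algebra: formal K-linear combinations of words;
   two formal sums represent the same element iff they have the same
   coefficient function [coef]. *)
Definition fsum := seq (K * seq gen).
Definition coef (s : fsum) (w : seq gen) : K :=
  \sum_(p <- s) (if p.2 == w then p.1 else 0).

Definition star_gen (g : gen) : gen :=
  match g with
  | inl v => inl v
  | inr (inl e) => inr (inr e)
  | inr (inr e) => inr (inl e)
  end.
Definition star_word (w : seq gen) : seq gen := rev (map star_gen w).

Definition is_path_gen (g : gen) : bool :=
  match g with inl _ => false | inr _ => true end.
Definition semigroup_word (w : seq gen) : Prop := w <> [::] /\ all is_path_gen w.

Definition sandwich (c : K) (a : seq gen) (r : fsum) (b : seq gen) : fsum :=
  [seq (c * p.1, a ++ p.2 ++ b) | p <- r].
End FreeAlgebra.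

Section CohnLeavitt.
Context (K : fieldType) (E0 E1 : countType) (s r : E1 -> E0)
        (Cty : Type) (cl : E1 -> Cty) (S : Cty -> Prop).
(* The separated graph (E,C): C is the set of fibres of cl (cl surjective
   ensures the blocks are nonempty). *)

Inductive relIdx :=
  | ROrth of E0 & E0                 (* v w = delta_{v,w} v            *)
  | RSrc of E1                       (* s(e) e = e                     *)
  | RRng of E1                       (* e r(e) = e                     *)
  | RRngS of E1                      (* r(e) e* = e*                   *)
  | RSrcS of E1                      (* e* s(e) = e*                   *)
  | RCK1 of E1 & E1                  (* e* f = delta_{e,f} r(e), e,f in the same Y *)
  | RCK2 of E0 & Cty & seq E1        (* v = sum_{e in X} e e*, X in S cap C_v *)
  | RAb of seq (gen E0 E1) & seq (gen E0 E1).
                                     (* l l* b b* = b b* l l*          *)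

Definition relValid (i : relIdx) : Prop :=
  match i with
  | RCK1 e f => cl e = cl f
  | RCK2 v Y l => S Y /\ uniq l /\ (forall e, (e \in l) <-> cl e = Y)
                  /\ (forall e, cl e = Y -> s e = v)
  | RAb lam bet => semigroup_word lam /\ semigroup_word bet
  | _ => True
  end.

Definition relElt (i : relIdx) : fsum K E0 E1 :=
  match i with
  | ROrth v w => (1, [:: gV E1 v; gV E1 w]) ::
                 (if v == w then [:: (-1, [:: gV E1 v])] else [::])
  | RSrc e => [:: (1, [:: gV E1 (s e); gE E0 e]); (-1, [:: gE E0 e])]
  | RRng e => [:: (1, [:: gE E0 e; gV E1 (r e)]); (-1, [:: gE E0 e])]
  | RRngS e => [:: (1, [:: gV E1 (r e); gS E0 e]); (-1, [:: gS E0 e])]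
  | RSrcS e => [:: (1, [:: gS E0 e; gV E1 (s e)]); (-1, [:: gS E0 e])]
  | RCK1 e f => (1, [:: gS E0 e; gE E0 f]) ::
                (if e == f then [:: (-1, [:: gV E1 (r e)])] else [::])
  | RCK2 v Y l => (1, [:: gV E1 v]) :: [seq (-1, [:: gE E0 e; gS E0 e]) | e <- l]
  | RAb lam bet =>
      [:: (1, lam ++ star_word lam ++ bet ++ star_word bet);
          (-1, bet ++ star_word bet ++ lam ++ star_word lam)]
  end.

(* membership in the two-sided ideal of the free algebra generated by the
   defining relations of AL_K(E,C,S) (relations of L_K(E,C,S) plus the
   abelianizing commutators). The ideal is the K-span of the products
   a * rel * b with a, b words (possibly empty). *)
Definition in_AL_ideal (x : fsum K E0 E1) : Prop :=
  exists L : seq (K * seq (gen E0 E1) * relIdx * seq (gen E0 E1)),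
    List.Forall (fun t => relValid t.1.2) L /\
    forall w, coef x w =
      coef (flatten [seq sandwich t.1.1.1 t.1.1.2 (relElt t.1.2) t.2 | t <- L]) w.

Definition AL_nonzero (x : fsum K E0 E1) : Prop := ~ in_AL_ideal x.
End CohnLeavitt.

Section Branching.
Context (E0 E1 : countType) (r : E1 -> E0) (Cty : Type) (cl : E1 -> Cty)
        (S : Cty -> Prop) (v0 : E0)
        (idx : E0 -> nat)        (* enumeration E^0 = {w_0, w_1, ...} *)
        (cidx : Cty -> nat).     (* enumeration C_{v0} = {Y_1, Y_2, ...} *)

Definition Dv (v : E0) : R * R := (INR (idx v), INR (idx v).+1).

(* t is an element of \tilde{Y_k}: an edge of Y_k, or (None) the extra
   symbol, present only when Y_k \notin S *)
Definition inTilde (k : nat) (t : option E1) : Prop :=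
  match t with
  | Some e => cidx (cl e) = k
  | None => exists Y, cidx Y = k /\ ~ S Y
  end.

(* an address of a stage-n cell: a sequence (t_1, ..., t_n), t_k in \tilde{Y_k} *)
Definition validAddr (a : seq (option E1)) : Prop :=
  forall k, (k < size a)%N -> inTilde k.+1 (nth None a k).

(* the cells (left-closed right-open intervals) of the inductive partition
   of D_{v0}: cell [::] = D_{v0}, and each cell of stage n is partitioned
   into nonempty subintervals indexed by \tilde{Y_{n+1}} *)
Definition nested_partition (cell : seq (option E1) -> R * R) : Prop :=
  cell [::] = Dv v0 /\
  forall a, validAddr a -> (exists Y, cidx Y = (size a).+1) ->
    (forall t, inTilde (size a).+1 t ->
       Rlt (fst (cell (rcons a t))) (snd (cell (rcons a t)))) /\
    (forall t t', inTilde (size a).+1 t -> inTilde (size a).+1 t' -> t <> t' ->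
       forall x, ~ (Ico (cell (rcons a t)) x /\ Ico (cell (rcons a t')) x)) /\
    (forall x, Ico (cell a) x <->
       exists t, inTilde (size a).+1 t /\ Ico (cell (rcons a t)) x).

(* the addresses indexing the intervals J_k whose union is R_e *)
Definition Jindex (e : E1) (a : seq (option E1)) : Prop :=
  validAddr a /\ size a = (cidx (cl e)).-1.

Definition Rset (cell : seq (option E1) -> R * R) (e : E1) (x : R) : Prop :=
  exists a, Jindex e a /\ Ico (cell (rcons a (Some e))) x.

(* f_e : D_{r(e)} -> R_e: D_{r(e)} is partitioned into nonempty intervals
   piece e a (a ranging over the index set of the J's) and f_e maps
   piece e a bijectively onto J_a = cell (a ++ [e]), with inverse g_e *)
Definition edge_maps (cell : seq (option E1) -> R * R)
    (piece : E1 -> seq (option E1) -> R * R) (f g : E1 -> R -> R) : Prop :=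
  forall e,
    (forall a, Jindex e a -> Rlt (fst (piece e a)) (snd (piece e a))) /\
    (forall a b, Jindex e a -> Jindex e b -> a <> b ->
       forall y, ~ (Ico (piece e a) y /\ Ico (piece e b) y)) /\
    (forall y, Ico (Dv (r e)) y <-> exists a, Jindex e a /\ Ico (piece e a) y) /\
    (forall a, Jindex e a ->
       (forall y, Ico (piece e a) y ->
          Ico (cell (rcons a (Some e))) (f e y) /\ g e (f e y) = y) /\
       (forall x, Ico (cell (rcons a (Some e))) x ->
          Ico (piece e a) (g e x) /\ f e (g e x) = x)).

(* the representation pi on M = functions to K (functions R -> K; values
   outside the union X of the D_v never matter) *)
Definition pi_gen (K : fieldType) (cell : seq (option E1) -> R * R)
    (f g : E1 -> R -> R) (x : gen E0 E1) (phi : R -> K) : R -> K :=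
  match x with
  | inl v => fun y => if pdec (Ico (Dv v) y) then phi y else 0
  | inr (inl e) => fun y => if pdec (Rset cell e y) then phi (g e y) else 0
  | inr (inr e) => fun y => if pdec (Ico (Dv (r e)) y) then phi (f e y) else 0
  end.

Definition pi_word (K : fieldType) cell f g (w : seq (gen E0 E1)) (phi : R -> K)
  : R -> K := foldr (@pi_gen K cell f g) phi w.

Definition pi_elt (K : fieldType) cell f g (x : fsum K E0 E1) (phi : R -> K)
  : R -> K := fun y => \sum_(p <- x) p.1 * pi_word cell f g p.2 phi y.
End Branching.

Definition x_elt (K : fieldType) (E0 E1 : countType) (v0 : E0) (g0 : K)
    (terms : seq (K * seq E1)) : fsum K E0 E1 :=
  (g0, [:: gV E1 v0]) ::
  [seq (t.1, flatten [seq [:: gE E0 e; gS E0 e] | e <- t.2]) | t <- terms].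

(* Main.v *)
Require Import Defs.
From Stdlib Require Import Reals.
From mathcomp Require Import all_boot all_order all_algebra.
From Stdlib Require Import ClassicalEpsilon Classical.
Set Implicit Arguments. Unset Strict Implicit. Unset Printing Implicit Defensive.
Import GRing.Theory.
Local Open Scope ring_scope.

Module A.

Section Ideal.
Variables (K : fieldType) (E0 E1 : countType) (s r : E1 -> E0) (Cty : Type)
  (cl : E1 -> Cty) (S : Cty -> Prop).
Notation fs := (fsum K E0 E1).
Notation word := (seq (gen E0 E1)).
Notation I := (@in_AL_ideal K E0 E1 s r Cty cl S).
Implicit Types (x y z : fs) (a b : word) (c : K).

Lemma coef_cat (x y : fs) w : coef (x ++ y) w = coef x w + coef y w.
Proof. by rewrite /coef big_cat. Qed.
Lemma coef_nil w : coef ([::] : fs) w = 0. Proof. by rewrite /coef big_nil. Qed.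
Lemma coef_cons p (x : fs) w :
  coef (p :: x) w = (if p.2 == w then p.1 else 0) + coef x w.
Proof. by rewrite /coef big_cons. Qed.

Lemma I_coef x y : (forall w, coef x w = coef y w) -> I y -> I x.
Proof. by move=> H [L [HL HE]]; exists L; split=> // w; rewrite H. Qed.

Lemma I_nil : I [::].
Proof. by exists [::]; split. Qed.

Lemma Forall_cat' T (P : T -> Prop) (a b : seq T) :
  List.Forall P a -> List.Forall P b -> List.Forall P (a ++ b).
Proof. by elim: a => //= h t IH H1 H2; inversion H1; constructor; auto. Qed.

Lemma I_cat x y : I x -> I y -> I (x ++ y).
Proof.
move=> [L [HL HE]] [L' [HL' HE']]; exists (L ++ L'); split.
  exact: Forall_cat'.
by move=> w; rewrite map_cat flatten_cat !coef_cat HE HE'.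
Qed.

Lemma I_rel i : relValid s cl S i -> I (relElt K s r i).
Proof.
move=> Hi; exists [:: (1, [::], i, [::])]; split; first by constructor.
move=> w /=; rewrite cats0 /sandwich /coef big_map; apply: eq_bigr => p _.
by rewrite /= mul1r cats0.
Qed.

Lemma coef_gen (F : word -> word) c (x : fs) W w :
  uniq W -> {subset [seq p.2 | p <- x] <= W} ->
  \sum_(p <- x) (if F p.2 == w then c * p.1 else 0) =
  \sum_(u <- W) (if F u == w then c * coef x u else 0).
Proof.
move=> uW sub.
transitivity (\sum_(u <- W) \sum_(p <- x)
   (if F u == w then c * (if p.2 == u then p.1 else 0) else 0)); last first.
  apply: eq_bigr => u _; case: ifP => _; last by rewrite big1.
  by rewrite /coef mulr_sumr.
rewrite exchange_big /=; apply: eq_big_seq => p px.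
have pW : p.2 \in W by apply: sub; apply/mapP; exists p.
rewrite (bigD1_seq p.2) //= eqxx big1_seq ?addr0 //.
move=> u /andP [nu _]; rewrite [p.2 == u]eq_sym (negbTE nu); by case: ifP; rewrite ?mulr0.
Qed.

Lemma coef_sandwich c a b (x : fs) W w :
  uniq W -> {subset [seq p.2 | p <- x] <= W} ->
  coef (sandwich c a x b) w =
  \sum_(u <- W) (if a ++ u ++ b == w then c * coef x u else 0).
Proof.
move=> uW sub; rewrite /coef /sandwich big_map /=.
exact: (coef_gen (fun u => a ++ u ++ b)).
Qed.

Lemma sandwich_flatten c a b (L : seq (K * word * relIdx E0 E1 Cty * word)) :
  sandwich c a (flatten [seq sandwich t.1.1.1 t.1.1.2 (relElt K s r t.1.2) t.2 | t <- L]) b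
  = flatten [seq sandwich t.1.1.1 t.1.1.2 (relElt K s r t.1.2) t.2 |
       t <- [seq (c * t.1.1.1, a ++ t.1.1.2, t.1.2, t.2 ++ b) | t <- L]].
Proof.
elim: L => //= t L IH; rewrite /sandwich map_cat -IH; congr (_ ++ _).
rewrite -map_comp; apply: eq_map => p /=; by rewrite mulrA !catA.
Qed.

Lemma I_sand c a b x : I x -> I (sandwich c a x b).
Proof.
move=> [L [HL HE]].
exists [seq (c * t.1.1.1, a ++ t.1.1.2, t.1.2, t.2 ++ b) | t <- L]; split.
  by clear HE; elim: L HL => //= t L IH H; inversion H; constructor; auto.
move=> w; rewrite -sandwich_flatten.
set y := flatten _.
set W := undup ([seq p.2 | p <- x] ++ [seq p.2 | p <- y]).
have uW : uniq W by apply: undup_uniq.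
rewrite (coef_sandwich c a b w uW) ?(coef_sandwich c a b w uW) //.
- by apply: eq_bigr => u _; rewrite HE.
- by move=> u uy; rewrite mem_undup mem_cat uy orbT.
- by move=> u ux; rewrite mem_undup mem_cat ux.
Qed.

Definition neg (x : fs) : fs := sandwich (-1) [::] x [::].
Lemma coef_neg x w : coef (neg x) w = - coef x w.
Proof.
rewrite /coef /neg /sandwich big_map -sumrN; apply: eq_bigr => p _ /=.
by rewrite cats0; case: ifP; rewrite ?oppr0 // mulN1r.
Qed.
Lemma coef_sc c x w : coef (sandwich c [::] x [::]) w = c * coef x w.
Proof.
rewrite /coef /sandwich big_map mulr_sumr; apply: eq_bigr => p _ /=.
by rewrite cats0; case: ifP; rewrite ?mulr0.
Qed.

Definition eqv x y := I (x ++ neg y).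

Lemma eqv_coef x y : (forall w, coef x w = coef y w) -> eqv x y.
Proof.
move=> H; apply: (I_coef (y := [::])) ; last exact: I_nil.
by move=> w; rewrite coef_cat coef_neg H subrr coef_nil.
Qed.
Lemma eqv_trans y x z : eqv x y -> eqv y z -> eqv x z.
Proof.
move=> H1 H2; apply: I_coef (I_cat H1 H2) => w.
by rewrite !coef_cat !coef_neg addrA subrK.
Qed.
Lemma eqv_sym x y : eqv x y -> eqv y x.
Proof.
move=> H; apply: I_coef (I_sand (-1) [::] [::] H) => w.
by rewrite coef_sc !coef_cat !coef_neg mulN1r opprD opprK addrC.
Qed.
Lemma eqv_cat x y (x' y' : fs) : eqv x y -> eqv x' y' -> eqv (x ++ x') (y ++ y').
Proof.
move=> H1 H2; apply: I_coef (I_cat H1 H2) => w.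
rewrite !coef_cat !coef_neg !coef_cat opprD; by rewrite addrACA.
Qed.
Lemma eqv_sand c a b x y : eqv x y -> eqv (sandwich c a x b) (sandwich c a y b).
Proof.
move=> H; have := I_sand c a b H.
have -> : sandwich c a (x ++ neg y) b = sandwich c a x b ++ neg (sandwich c a y b).
  rewrite /neg /sandwich map_cat -!map_comp; congr (_ ++ _); apply: eq_map => p /=.
  by rewrite !cats0 mulrCA.
by [].
Qed.
Lemma eqv_I x y : eqv x y -> I y -> I x.
Proof.
move=> H1 H2; apply: I_coef (I_cat H1 H2) => w.
by rewrite !coef_cat coef_neg subrK.
Qed.
Lemma I_eqv x y : eqv x y -> I x -> I y.
Proof. by move=> /eqv_sym; apply: eqv_I. Qed.
Lemma eqv_refl x : eqv x x. Proof. exact: eqv_coef. Qed.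
Lemma eqv0 x : I x -> eqv x [::].
Proof. by move=> H; rewrite /eqv cats0. Qed.



Lemma weq_of w1 w2 : I [:: (1, w1); (-1, w2)] -> eqv [:: (1, w1)] [:: (1, w2)].
Proof. by rewrite /eqv /neg /sandwich /= cats0 mulr1. Qed.
Lemma weq_I w1 w2 : eqv [:: (1, w1)] [:: (1, w2)] -> I [:: (1, w1); (-1, w2)].
Proof. by rewrite /eqv /neg /sandwich /= cats0 mulr1. Qed.

Lemma weq_sand a b w1 w2 : eqv [:: (1, w1)] [:: (1, w2)] ->
  eqv [:: (1, a ++ w1 ++ b)] [:: (1, a ++ w2 ++ b)].
Proof. by move/(eqv_sand 1 a b); rewrite /sandwich /= mulr1. Qed.
Lemma weq_scale c w1 w2 : eqv [:: (1, w1)] [:: (1, w2)] ->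
  eqv [:: (c, w1)] [:: (c, w2)].
Proof. by move/(eqv_sand c [::] [::]); rewrite /sandwich /= mulr1 !cats0. Qed.

Lemma eqv_flatten (T : eqType) (F G : T -> fs) (l : seq T) :
  (forall t, t \in l -> eqv (F t) (G t)) ->
  eqv (flatten (map F l)) (flatten (map G l)).
Proof.
elim: l => [|t l IH] H /=; first exact: eqv_refl.
apply: eqv_cat; first by apply: H; rewrite inE eqxx.
by apply: IH => u ul; apply: H; rewrite inE ul orbT.
Qed.

Lemma eqv_map (T : eqType) (F G : T -> K * word) (l : seq T) :
  (forall t, t \in l -> eqv [:: F t] [:: G t]) -> eqv (map F l) (map G l).
Proof.
move=> H; have := @eqv_flatten _ (fun t => [:: F t]) (fun t => [:: G t]) l H.
suff E : forall (h : T -> K * word), flatten (map (fun t => [:: h t]) l) = map h l by rewrite !E.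
by move=> h; elim: l {H} => //= t l ->.
Qed.

End Ideal.

Section Words.
Variables (K : fieldType) (E0 E1 : countType) (s r : E1 -> E0) (Cty : Type)
  (cl : E1 -> Cty) (S : Cty -> Prop) (v0 : E0).
Hypothesis s_v0 : forall e, s e = v0.
Notation fs := (fsum K E0 E1).
Notation word := (seq (gen E0 E1)).
Notation I := (@in_AL_ideal K E0 E1 s r Cty cl S).
Notation eqv := (@eqv K E0 E1 s r Cty cl S).
Notation weq w1 w2 := (eqv [:: (1, w1)] [:: (1, w2)]).

Definition Pw (e : E1) : word := [:: gE E0 e; gS E0 e].
Definition vw : word := [:: gV E1 v0].
Definition mv (T : seq E1) : word := flatten (map Pw T) ++ vw.
Definition emb (x : seq (K * seq E1)) : fs := [seq (t.1, mv t.2) | t <- x].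

Lemma mv_cons e T : mv (e :: T) = Pw e ++ mv T.
Proof. by []. Qed.

Lemma weq_trans w2 w1 w3 : weq w1 w2 -> weq w2 w3 -> weq w1 w3.
Proof. exact: eqv_trans. Qed.
Lemma weq_sym w1 w2 : weq w1 w2 -> weq w2 w1.
Proof. exact: eqv_sym. Qed.

Lemma comm_w e f w : weq (Pw f ++ Pw e ++ w) (Pw e ++ Pw f ++ w).
Proof.
apply: weq_of.
have := I_sand 1 [::] w (@I_rel K _ _ s r _ cl S (RAb Cty [:: gE E0 f] [:: gE E0 e]) _).
move=> H; apply: I_coef (H _) => [u|]; last by split.
by rewrite /sandwich /= !mul1r.
Qed.

Lemma idem_w e w : weq (Pw e ++ Pw e ++ w) (Pw e ++ w).
Proof.
apply: (weq_trans (w2 := [:: gE E0 e; gV E1 (r e); gS E0 e] ++ w)); apply: weq_of.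
- have := I_sand 1 [:: gE E0 e] (gS E0 e :: w)
     (@I_rel K _ _ s r _ cl S (RCK1 E0 Cty e e) erefl).
  move=> H; apply: I_coef H => u; by rewrite /= eqxx /sandwich /= !mul1r.
- have := I_sand 1 [::] (gS E0 e :: w) (@I_rel K _ _ s r _ cl S (RRng E0 Cty e) Logic.I).
  move=> H; apply: I_coef H => u; by rewrite /sandwich /= !mul1r.
Qed.

Lemma zero_w e f w : cl e = cl f -> e != f -> I [:: (1, Pw e ++ Pw f ++ w)].
Proof.
move=> Hc ne.
have := I_sand 1 [:: gE E0 e] (gS E0 f :: w) (@I_rel K _ _ s r _ cl S (RCK1 E0 Cty e f) Hc).
move=> H; apply: I_coef H => u; by rewrite /= (negbTE ne) /sandwich /= !mul1r.
Qed.


Lemma weq_l a w1 w2 : weq w1 w2 -> weq (a ++ w1) (a ++ w2).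
Proof. by move/(weq_sand a [::]); rewrite !cats0. Qed.

Lemma all_predC1 (e : E1) T : e \notin T -> filter (predC1 e) T = T.
Proof.
move=> eT; apply/all_filterP/allP => y yT /=; apply/eqP => E; subst.
by rewrite yT in eT.
Qed.

Lemma move_w e T : e \in T -> weq (mv T) (Pw e ++ mv (filter (predC1 e) T)).
Proof.
elim: T => //= f T IH; rewrite inE => eT.
have [Hfe|ne] := eqVneq f e.
  subst f; rewrite mv_cons; simpl.
  case: (boolP (e \in T)) => eT'.
    apply: weq_trans (weq_l (Pw e) (IH eT')) _.
    exact: idem_w.
  rewrite all_predC1 //; exact: eqv_refl.
have eT' : e \in T by case/orP: eT => // /eqP E; rewrite E eqxx in ne.
rewrite mv_cons; simpl.
apply: weq_trans (weq_l (Pw f) (IH eT')) _.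
rewrite mv_cons; exact: comm_w.
Qed.

Lemma zero_T e f T : e \in T -> f \in T -> e != f -> cl e = cl f -> I [:: (1, mv T)].
Proof.
move=> eT fT ne Hc.
have f1 : f \in filter (predC1 e) T by rewrite mem_filter /= eq_sym ne fT.
have H := weq_trans (move_w eT) (weq_l (Pw e) (move_w f1)).
apply: eqv_I H _; exact: zero_w.
Qed.

Lemma v_w T : weq (mv T) (vw ++ mv T).
Proof.
case: T => [|e T].
  apply: weq_sym; apply: weq_of.
  have := @I_rel K _ _ s r _ cl S (ROrth E1 Cty v0 v0) Logic.I.
  by move=> H; apply: I_coef H => u; rewrite /= eqxx.
apply: weq_sym; apply: weq_of.
have := I_sand 1 [::] (gS E0 e :: mv T) (@I_rel K _ _ s r _ cl S (RSrc E0 Cty e) Logic.I).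
move=> H; apply: I_coef H => u; by rewrite /sandwich /= !mul1r s_v0.
Qed.

Lemma ck2_w T Y (l : seq E1) : S Y -> uniq l -> (forall e, e \in l <-> cl e = Y) ->
  eqv [:: (1, mv T)] [seq (1, Pw f ++ mv T) | f <- l].
Proof.
move=> SY ul Hl; apply: eqv_trans (v_w T) _.
have := I_sand 1 [::] (mv T) (@I_rel K _ _ s r _ cl S (RCK2 v0 Y l)
  (conj SY (conj ul (conj Hl (fun e _ => s_v0 e))))).
rewrite /eqv; congr I; rewrite /sandwich /neg /= mulr1 -!map_comp; congr (_ :: _).
rewrite /sandwich -map_comp; apply: eq_map => f /=; by rewrite mul1r mulr1 cats0.
Qed.

Lemma mw_mv T : T != [::] -> weq (flatten (map Pw T)) (mv T).
Proof.
elim: T => //= e T IH _; case: T IH => [|f T] IH.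
  apply: weq_sym; apply: weq_of.
  have := I_sand 1 [:: gE E0 e] [::] (@I_rel K _ _ s r _ cl S (RSrcS E0 Cty e) Logic.I).
  move=> H; apply: I_coef H => u; by rewrite /sandwich /= !mul1r s_v0.
exact: (weq_l (Pw e) (IH erefl)).
Qed.

End Words.

End A.
Import A.

Module B.

Section Sem.
Variables (K : fieldType) (E0 E1 : countType) (s r : E1 -> E0) (Cty : Type)
  (cl : E1 -> Cty) (S : Cty -> Prop) (v0 : E0) (cidx : Cty -> nat).
Hypothesis s_v0 : forall e, s e = v0.
Hypothesis cl_surj : forall Y, exists e, cl e = Y.
Hypothesis cidx_inj : injective cidx.
Hypothesis S_fin : forall Y, S Y -> exists l : seq E1, forall e, (e \in l) <-> cl e = Y.
Notation fs := (fsum K E0 E1).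
Notation I := (@in_AL_ideal K E0 E1 s r Cty cl S).
Notation eqv := (@eqv K E0 E1 s r Cty cl S).
Notation emb := (@emb K E0 E1 v0).
Notation mv := (@mv E0 E1 v0).

Definition blk (e : E1) := cidx (cl e).
Definition validc (c : nat -> option E1) :=
  forall k, (exists Y, cidx Y = k) -> inTilde cl S cidx k (c k).
Definition sem (c : nat -> option E1) (T : seq E1) :=
  all (fun e => c (blk e) == Some e) T.
Definition Phi c (x : seq (K * seq E1)) := \sum_(t <- x) t.1 * (sem c t.2)%:R.
Definition upd (c : nat -> option E1) k t := fun j => if j == k then t else c j.

Lemma Phi_split c x (P : pred (K * seq E1)) :
  Phi c x = Phi c (filter P x) + Phi c (filter (predC P) x).
Proof. by rewrite /Phi !big_filter (bigID P). Qed.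

Lemma Phi_cat c x y : Phi c (x ++ y) = Phi c x + Phi c y.
Proof. by rewrite /Phi big_cat. Qed.

Lemma Phi_flatten (T : Type) c (F : T -> seq (K * seq E1)) l :
  Phi c (flatten (map F l)) = \sum_(t <- l) Phi c (F t).
Proof. elim: l => [|t l IH]; first by rewrite /Phi !big_nil. by rewrite big_cons -IH -Phi_cat. Qed.

Lemma coef_split x (P : pred (K * seq E1)) u :
  coef (emb x) u = coef (emb (filter P x)) u + coef (emb (filter (predC P) x)) u.
Proof. by rewrite /coef /A.emb !big_map !big_filter (bigID P). Qed.

Lemma coef_flatten (T : Type) (F : T -> fs) l u :
  coef (flatten (map F l)) u = \sum_(t <- l) coef (F t) u.
Proof. elim: l => [|t l IH]; first by rewrite big_nil /= coef_nil. by rewrite big_cons -IH -coef_cat. Qed.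

Lemma sem_e c e T : e \in T ->
  sem c T = (c (blk e) == Some e) && sem c (filter (predC1 e) T).
Proof.
move=> eT; apply/allP/andP => [H|[H1 /allP H2] f fT].
  split; first exact: H.
  by apply/allP => f; rewrite mem_filter => /andP [_ /H].
by have [->|nf] := eqVneq f e; [|apply: H2; rewrite mem_filter /= nf].
Qed.

Lemma sem_cons c f T : sem c (f :: T) = (c (blk f) == Some f) && sem c T.
Proof. by []. Qed.

Lemma sem_upd c k t T :
  (forall f, f \in T -> blk f = k -> (c k == Some f) = (t == Some f)) ->
  sem c T = sem (upd c k t) T.
Proof.
move=> H; apply: eq_in_all => f fT; rewrite /upd.
have [Hb|Hb] := eqVneq (blk f) k; last by []. by rewrite Hb; apply: H.
Qed.

Lemma validc_upd c k t : validc c -> inTilde cl S cidx k t -> validc (upd c k t).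
Proof. by move=> Hc Ht j Hj; rewrite /upd; case: eqP => [->|_] //; apply: Hc. Qed.

Lemma Phi_e0 c e x : c (blk e) != Some e ->
  Phi c (filter (fun t => e \in t.2) x) = 0.
Proof.
move=> ne; rewrite /Phi big_filter big1 // => t et.
by rewrite (sem_e _ et) (negbTE ne) mulr0.
Qed.

Definition pickc k : option E1 :=
  match excluded_middle_informative (exists e, blk e = k /\ S (cl e)) with
  | left H => Some (proj1_sig (constructive_indefinite_description _ H))
  | right _ => None
  end.

Lemma pickc_valid : validc pickc.
Proof.
move=> k [Y HY]; rewrite /pickc; case: excluded_middle_informative => [H|H].
  by case: constructive_indefinite_description => e [He _] /=.
exists Y; split=> // SY; apply: H; have [e He] := cl_surj Y.
by exists e; rewrite /blk He.
Qed.

Lemma I_map (T : eqType) (F : T -> K * seq (gen E0 E1)) (l : seq T) :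
  (forall t, t \in l -> I [:: F t]) -> I (map F l).
Proof.
elim: l => [|t l IH] H /=; first exact: I_nil.
apply: (I_cat (x := [:: F t])); first by apply: H; rewrite inE eqxx.
by apply: IH => u ul; apply: H; rewrite inE ul orbT.
Qed.


Lemma I_scale1 c w : I [:: (1, w)] -> I [:: (c, w)].
Proof. by move/(I_sand c [::] [::]); rewrite /sandwich /= mulr1 cats0. Qed.

Lemma eqv_move (M A B Bn : fs) : eqv M (A ++ B) ->
  (forall u, coef Bn u = - coef B u) -> eqv A (M ++ Bn).
Proof.
move=> H HB; apply: I_coef (I_sand (-1) [::] [::] H) => u.
rewrite coef_sc !coef_cat !coef_neg !coef_cat HB; rewrite mulN1r.
by rewrite !opprD !opprK addrC -!addrA [X in _ + X]addrC.
Qed.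

Lemma flatten1 (T : Type) (h : T -> K * seq (gen E0 E1)) l :
  flatten (map (fun t => [:: h t]) l) = map h l.
Proof. by elim: l => //= t l ->. Qed.

Lemma emb_split x (P : pred (K * seq E1)) :
  eqv (emb x) (emb (filter P x) ++ emb (filter (predC P) x)).
Proof. by apply: eqv_coef => u; rewrite coef_cat (coef_split _ P). Qed.

Lemma main_alg (F : seq E1) : forall x : seq (K * seq E1),
  all (fun t => all (fun f => f \in F) t.2) x ->
  (forall c, validc c -> Phi c x = 0) -> I (emb x).
Proof.
elim: F => [|e F IH] x Hs HP.
  have Hx : forall t, t \in x -> t.2 = [::].
    by move=> t /(allP Hs); case: t.2.
  have H0 := HP _ pickc_valid.
  apply: (I_coef (y := [::])); last exact: I_nil. move=> u; rewrite coef_nil /coef /A.emb big_map.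
  transitivity (\sum_(t <- x) (if vw E1 v0 == u then t.1 else 0)).
    by apply: eq_big_seq => t tx; rewrite /= (Hx t tx).
  case: eqP => _; last by rewrite big1.
  rewrite -[RHS]H0 /Phi; apply: eq_big_seq => t tx; by rewrite (Hx t tx) /= mulr1.
set k := blk e.
set Pe := fun t : K * seq E1 => e \in t.2.
set x0 := filter (predC Pe) x.
set xe := filter Pe x.
have Hsub0 : all (fun t => all (fun f => f \in F) t.2) x0.
  apply/allP => t; rewrite mem_filter => /andP [ne tx].
  apply/allP => f fT; have := allP (allP Hs t tx) f fT; rewrite inE.
  case/orP => // /eqP Ef; subst f; by move: ne; rewrite /= /Pe fT.
have HPs : forall c, Phi c x = Phi c xe + Phi c x0 by move=> c; apply: Phi_split.
have Hemb : eqv (emb x) (emb xe ++ emb x0) by apply: emb_split.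
have [[t [Ht Htn]]|Hn] := classic (exists t, inTilde cl S cidx k t /\
                               forall f, f \in e :: F -> t <> Some f).
- have H0 : forall c, validc c -> Phi c x0 = 0.
    move=> c Hc; have [ce|ce] := eqVneq (c k) (Some e); last first.
      by have := HP c Hc; rewrite HPs Phi_e0 ?add0r.
    set c' := upd c k t.
    have Hc' : validc c' by apply: validc_upd.
    have Eq1 : Phi c x0 = Phi c' x0.
      rewrite /Phi; apply: eq_big_seq => t0; rewrite mem_filter => /andP [ne tx].
      suff -> : sem c t0.2 = sem c' t0.2 by []. apply: sem_upd => f fT bf; rewrite ce.
      have fe : f != e by apply: contraNneq ne => Ef; rewrite /= /Pe -Ef fT.
      have fF : f \in e :: F by apply: (allP (allP Hs t0 tx)).
      have [Etf|Etf] := eqVneq t (Some f); first by have := Htn f fF.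
      by apply/negbTE/negP => /eqP [E]; rewrite E eqxx in fe.
    rewrite Eq1; have := HP c' Hc'; rewrite HPs Phi_e0 ?add0r //.
    rewrite /c' /upd /k eqxx; apply/eqP => Et; exact: (Htn e (mem_head _ _) Et).
  set good := fun t : K * seq E1 => all (fun f => (f == e) || (blk f != k)) t.2.
  set xg := filter good xe; set xb := filter (predC good) xe.
  set x1 := [seq (t0.1, filter (predC1 e) t0.2) | t0 <- xg].
  have H1 : forall c, validc c -> Phi c x1 = 0.
    move=> c Hc; set c' := upd c k (Some e).
    have Hc' : validc c' by apply: validc_upd.
    have Eq1 : Phi c x1 = Phi c' xg.
      rewrite /Phi big_map; apply: eq_big_seq => t0.
      rewrite !mem_filter => /andP [gt /andP [et tx]] /=.
      suff -> : sem c (filter (predC1 e) t0.2) = sem c' t0.2 by []. rewrite (sem_e c' et) /c' /upd /k eqxx eqxx /=.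
      apply: sem_upd => f; rewrite mem_filter => /andP [fe fT] bf.
      by have := allP gt f fT; rewrite (negbTE fe) bf /k eqxx.
    have Eb : Phi c' xb = 0.
      rewrite /Phi big1_seq // => t0 /andP [_]; rewrite !mem_filter.
      move=> /andP [ng /andP [et tx]].
      move: ng; rewrite /= /good -has_predC => /hasP [f fT] /=.
      rewrite negb_or negbK => /andP [fe /eqP bf].
      suff -> : sem c' t0.2 = false by rewrite mulr0.
      apply/negbTE/negP => /allP /(_ f fT); rewrite /c' /upd bf eqxx.
      by move=> /eqP [E]; rewrite E eqxx in fe.
    have := HP c' Hc'; rewrite HPs (H0 c' Hc') addr0.
    by rewrite (Phi_split c' xe good) -/xg -/xb Eb addr0 Eq1.
  have Hsub1 : all (fun t => all (fun f => f \in F) t.2) x1.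
    apply/allP => t0 /mapP [t1 t1g ->] /=; apply/allP => f.
    rewrite mem_filter => /andP [fe fT].
    move: t1g; rewrite !mem_filter => /andP [_ /andP [_ tx]].
    have := allP (allP Hs t1 tx) f fT; by rewrite inE (negbTE fe).
  have IH0 := IH x0 Hsub0 H0.
  have IH1 := IH x1 Hsub1 H1.
  have Hg : eqv (emb xg) (sandwich 1 (Pw E0 e) (emb x1) [::]).
    rewrite /sandwich /A.emb -!map_comp; apply: eqv_map => t0.
    rewrite !mem_filter => /andP [_ /andP [et _]] /=; rewrite mul1r cats0.
    by apply: weq_scale; apply: move_w.
  have Hb : I (emb xb).
    apply: I_map => t0; rewrite !mem_filter => /andP [ng /andP [et tx]].
    move: ng; rewrite /= /good -has_predC => /hasP [f fT] /=.
    rewrite negb_or negbK => /andP [fe /eqP bf].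
    apply: I_scale1; apply: (zero_T _ _ _ _ _ et fT); first by rewrite eq_sym.
    by apply: cidx_inj; rewrite -/(blk f) bf.
  apply: eqv_I Hemb _; apply: I_cat IH0.
  apply: eqv_I (emb_split xe good) _; apply: I_cat Hb.
  apply: eqv_I Hg _; exact: I_sand.
- have Hnot : forall t0, inTilde cl S cidx k t0 -> exists f, f \in e :: F /\ t0 = Some f.
    move=> t0 Ht0; apply: NNPP => Hno; apply: Hn; exists t0; split => // f fF Ef.
    by apply: Hno; exists f.
  have SY : S (cl e).
    apply: NNPP => nS; have [f [_ Ef]] := Hnot None (ex_intro _ (cl e) (conj erefl nS)).
    by [].
  have [l0 Hl0] := S_fin SY.
  set l := undup l0.
  have Hl : forall f, f \in l <-> cl f = cl e by move=> f; rewrite mem_undup.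
  have ul : uniq l by apply: undup_uniq.
  have el : e \in l by apply/Hl.
  set l2 := filter (predC1 e) l.
  have ul2 : uniq l2 by apply: filter_uniq.
  have Hl2 : forall f, f \in l2 -> f \in F /\ blk f = k.
    move=> f; rewrite mem_filter => /andP [fe /Hl fl].
    have bf : blk f = k by rewrite /blk fl.
    have [f' [f'F [Ef]]] := Hnot (Some f) bf; subst f'.
    by move: f'F; rewrite inE (negbTE fe).
  set T' := fun t0 : K * seq E1 => filter (predC1 e) t0.2.
  set x1f := [seq (t0.1, T' t0) | t0 <- xe].
  set xn := flatten [seq [seq (- t0.1, f :: T' t0) | f <- l2] | t0 <- xe].
  set x' := x0 ++ (x1f ++ xn).
  have HsubT : forall t0, t0 \in xe -> all (fun f => f \in F) (T' t0).
    move=> t0; rewrite mem_filter => /andP [_ tx]; apply/allP => f.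
    rewrite mem_filter => /andP [fe fT].
    have := allP (allP Hs t0 tx) f fT; by rewrite inE (negbTE fe).
  have Hsub' : all (fun t => all (fun f => f \in F) t.2) x'.
    rewrite /x' !all_cat Hsub0 /=; apply/andP; split.
      by apply/allP => t0 /mapP [t1 t1e ->]; apply: HsubT.
    apply/allP => t0 /flattenP [ts /mapP [t1 t1e ->]] /mapP [f fl ->] /=.
    by rewrite (Hl2 f fl).1 /=; apply: HsubT.
  have HP' : forall c, validc c -> Phi c x' = 0.
    move=> c Hc; rewrite -(HP c Hc) HPs /x' !Phi_cat addrC; congr (_ + _).
    have [f0 [f0F Ec]] := Hnot (c k) (Hc k (ex_intro _ (cl e) erefl)).
    have bf0 : blk f0 = k by have := Hc k (ex_intro _ (cl e) erefl); rewrite Ec.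
    have f0l : f0 \in l by apply/Hl; apply: cidx_inj.
    rewrite /Phi /xn big_map big_flatten /= big_map -big_split /=.
    apply: eq_big_seq => t0; rewrite mem_filter => /andP [et _].
    rewrite big_map (sem_e c et) -/(T' t0).
    under eq_bigr => f _ do rewrite /=.
    case: (sem c (T' t0)); last first.
      by rewrite andbF mulr0 add0r big1 // => f _; rewrite andbF mulr0.
    under eq_bigr => f _ do rewrite andbT.
    rewrite andbT mulr1.
    have E2 : \sum_(f <- l2) - t0.1 * (c (blk f) == Some f)%:R =
              - t0.1 * (f0 != e)%:R.
      rewrite -mulr_sumr; congr (_ * _).
      transitivity (\sum_(f <- l2) (f0 == f)%:R : K).
        apply: eq_big_seq => f fl; rewrite (Hl2 f fl).2 Ec.
        by congr (_%:R); apply/eqP/eqP => [[]|->].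
      have [f0e|f0e] := eqVneq f0 e.
        rewrite big1_seq // => f /andP [_]; rewrite mem_filter => /andP [fe _].
        by subst f0; move: fe => /= /negbTE; rewrite eq_sym => ->.
      have f0l2 : f0 \in l2 by rewrite mem_filter /= f0e.
      rewrite (bigD1_seq f0) //= eqxx big1_seq ?addr0 // => f /andP [nf _].
      by rewrite eq_sym (negbTE nf).
    rewrite E2 Ec; have [->|ne] := eqVneq f0 e; first by rewrite eqxx /= mulr0 addr0 mulr1.
    have -> : (Some f0 == Some e) = false by apply/negbTE; apply: contra ne => /eqP [->].
    by rewrite /= mulr0 mulr1 addrN.
  have IH' := IH x' Hsub' HP'.
  have Hxe : eqv (emb xe) (emb x1f ++ emb xn).
    set G := fun t0 : K * seq E1 => [:: (t0.1, mv (T' t0))] ++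
                 [seq (- t0.1, Pw E0 f ++ mv (T' t0)) | f <- l2].
    apply: (eqv_trans (y := flatten (map G xe))).
      rewrite -[emb xe]flatten1; apply: eqv_flatten => t0.
      rewrite mem_filter => /andP [et _]; rewrite /G.
      apply: (eqv_move (M := [:: (t0.1, mv (T' t0))])
                 (B := [seq (t0.1, Pw E0 f ++ mv (T' t0)) | f <- l2])); last first.
        move=> u; rewrite /coef !big_map -sumrN; apply: eq_bigr => f _ /=.
        by case: ifP; rewrite ?oppr0.
      apply: (eqv_trans (y := [:: (t0.1, Pw E0 e ++ mv (T' t0))] ++
                 [seq (t0.1, Pw E0 f ++ mv (T' t0)) | f <- l2])); last first.
        apply: eqv_cat; last exact: eqv_refl.
        by apply: eqv_sym; apply: weq_scale; apply: move_w.
      have H1 := eqv_sand t0.1 [::] [::] (@ck2_w K _ _ s r _ cl S v0 s_v0 (T' t0) _ _ SY ul Hl).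
      apply: (eqv_trans (y := sandwich t0.1 [::] [:: (1, mv (T' t0))] [::])).
        by apply: eqv_coef => u; rewrite /sandwich /= mulr1 cats0.
      apply: eqv_trans H1 _; apply: eqv_coef => u.
      rewrite /sandwich -map_comp /coef big_map (perm_big _ (perm_to_rem el)).
      rewrite big_cons (rem_filter _ ul) big_cons big_map /= mulr1 cats0.
      by congr (_ + _); apply: eq_bigr => f _ /=; rewrite mulr1 cats0.
    apply: eqv_coef => u; rewrite coef_cat !coef_flatten /xn /A.emb map_flatten.
    rewrite coef_flatten big_map /x1f -map_comp -(flatten1 (_ \o _)) coef_flatten -big_split.
    apply: eq_bigr => t0 _; rewrite /G coef_cat -map_comp. by [].
  apply: eqv_I Hemb _; apply: (I_eqv (x := emb x')); last exact: IH'.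
  apply: (eqv_trans (y := emb x0 ++ (emb x1f ++ emb xn))).
    by apply: eqv_coef => u; rewrite /x' /A.emb !map_cat.
  apply: (eqv_trans (y := emb x0 ++ emb xe)).
    by apply: eqv_cat; [apply: eqv_refl | apply: eqv_sym].
  by apply: eqv_coef => u; rewrite !coef_cat addrC.
Qed.
End Sem.

End B.
Import B.

Module C.

Lemma pdecT (P : Prop) : P -> pdec P = true.
Proof. by rewrite /pdec; case: excluded_middle_informative. Qed.
Lemma pdecF (P : Prop) : ~ P -> pdec P = false.
Proof. by rewrite /pdec; case: excluded_middle_informative. Qed.

Section Geo.
Variables (E0 E1 : countType) (r : E1 -> E0) (Cty : Type) (cl : E1 -> Cty)
  (S : Cty -> Prop) (v0 : E0) (idx : E0 -> nat) (cidx : Cty -> nat)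
  (cell : seq (option E1) -> R * R) (piece : E1 -> seq (option E1) -> R * R)
  (f g : E1 -> R -> R).
Hypothesis cidx_inj : injective cidx.
Hypothesis cidx_pos : forall Y, (0 < cidx Y)%N.
Hypothesis Hcell : nested_partition cl S v0 idx cidx cell.
Hypothesis Hf : edge_maps r cl S idx cidx cell piece f g.

Notation valid := (validAddr cl S cidx).
Notation tilde := (inTilde cl S cidx).

Lemma tilde_ex k t : tilde k t -> exists Y, cidx Y = k.
Proof. by case: t => [e /= <-|[Y [HY _]]]; [exists (cl e)|exists Y]. Qed.

Lemma valid_rcons a t : valid (rcons a t) <-> valid a /\ tilde (size a).+1 t.
Proof.
split.
  move=> H; split.
    move=> k ka; have := H k; rewrite size_rcons nth_rcons ka; apply.
    exact: ltnW.
  by have := H (size a); rewrite size_rcons nth_rcons ltnn eqxx; apply.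
move=> [Ha Ht] k; rewrite size_rcons ltnS nth_rcons leq_eqVlt.
case/orP => [/eqP ->|ka]; first by rewrite ltnn eqxx.
by rewrite ka; apply: Ha.
Qed.

Lemma valid_take n a : valid a -> valid (take n a).
Proof.
move=> Ha k; rewrite size_take => kn.
have ka : (k < size a)%N by move: kn; case: ifP => // H1 H2; apply: ltn_trans H2 H1.
rewrite nth_take; first exact: Ha.
by move: kn; case: ifP => // /negbT; rewrite -leqNgt => H1 H2; apply: leq_trans H2 H1.
Qed.

Lemma cell_sub a t y : valid (rcons a t) -> Ico (cell (rcons a t)) y -> Ico (cell a) y.
Proof.
move=> /valid_rcons [Ha Ht] Hy.
have [_ [_ Hcov]] := Hcell.2 a Ha (tilde_ex Ht).
by apply/Hcov; exists t.
Qed.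

Lemma cell_take a y n : valid a -> Ico (cell a) y -> Ico (cell (take n a)) y.
Proof.
elim/last_ind: a n => [|a t IH] n Ha Hy; first by [].
have [Hs|Hs] := leqP (size (rcons a t)) n; first by rewrite take_oversize.
move: Hs; rewrite size_rcons ltnS => Hs.
rewrite -cats1 takel_cat //; apply: IH; first by have [] := (valid_rcons a t).1 Ha.
exact: cell_sub Hy.
Qed.

Lemma cell_uniq a b y : valid a -> valid b -> (size b <= size a)%N ->
  Ico (cell a) y -> Ico (cell b) y -> b = take (size b) a.
Proof.
move=> Ha; elim/last_ind: b => [|b t IH] Hb Hs Hya Hyb; first by rewrite take0.
have [Hb' Ht] := (valid_rcons b t).1 Hb.
move: Hs; rewrite size_rcons => Hs.
have Eb := IH Hb' (ltnW Hs) Hya (cell_sub Hb Hyb).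
rewrite (take_nth None Hs) -Eb; congr rcons.
set t' := nth None a (size b).
have Ht' : tilde (size b).+1 t' by apply: Ha.
have Hy' : Ico (cell (rcons b t')) y.
  by rewrite Eb -take_nth //; apply: cell_take.
apply: NNPP => ne.
have [_ [Hdis _]] := Hcell.2 b Hb' (tilde_ex Ht).
exact: (Hdis t t' Ht Ht' ne y (conj Hyb Hy')).
Qed.

Lemma cell_ne a : valid a -> Rlt (fst (cell a)) (snd (cell a)).
Proof.
elim/last_ind: a => [|a t _] Ha.
  rewrite Hcell.1 /Dv; change (Rlt (INR (idx v0)) (INR (idx v0).+1)); apply: lt_INR; apply/ltP; exact: ltnSn.
have [Ha' Ht] := (valid_rcons a t).1 Ha.
have [Hne _] := Hcell.2 a Ha' (tilde_ex Ht).
exact: Hne.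
Qed.

Lemma Rset_addr a y e : valid a -> Ico (cell a) y -> (cidx (cl e) <= size a)%N ->
  Defs.Rset cl S cidx cell e y <-> nth None a (cidx (cl e)).-1 = Some e.
Proof.
move=> Ha Hy Hk; have Hp := cidx_pos (cl e).
have Hk1 : ((cidx (cl e)).-1 < size a)%N by rewrite prednK.
split.
  move=> [b [[Hb Hsb] Hyb]].
  have Hvb : valid (rcons b (Some e)).
    by apply/valid_rcons; split=> //=; rewrite Hsb prednK.
  have := cell_uniq Ha Hvb _ Hy Hyb; rewrite size_rcons Hsb prednK // => E.
  have := congr1 (fun s => nth None s (cidx (cl e)).-1) (E Hk).
  by rewrite nth_rcons Hsb ltnn eqxx nth_take ?prednK // => <-.
move=> Hn; exists (take (cidx (cl e)).-1 a); split.
  by split; [apply: valid_take | rewrite size_takel // ltnW].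
by rewrite -Hn -take_nth // prednK //; apply: cell_take.
Qed.

Lemma piw_flat (K : fieldType) y T :
  pi_word r cl S idx cidx cell f g (flatten [seq [:: gE E0 e; gS E0 e] | e <- T])
    (fun _ => (1 : K)) y =
  (all (fun e => pdec (Defs.Rset cl S cidx cell e y)) T)%:R.
Proof.
elim: T => [|e T IH] //=.
rewrite /pi_gen; case: (boolP (pdec (Defs.Rset cl S cidx cell e y))) => HR /=; last first.
  by [].
idtac.
have [b [Jb Hyb]] : Defs.Rset cl S cidx cell e y by move: HR; rewrite /pdec; case: excluded_middle_informative.
have [_ [_ [Hcov Hmap]]] := Hf e.
have [Hg Hfg] := (Hmap b Jb).2 y Hyb.
rewrite pdecT; last by apply/Hcov; exists b.
by rewrite Hfg IH.
Qed.

End Geo.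

End C.
Import C.

Lemma xelt_eqv (K : fieldType) (E0 E1 : countType) (s r : E1 -> E0) (Cty : Type)
  (cl : E1 -> Cty) (S : Cty -> Prop) (v0 : E0) (s_v0 : forall e, s e = v0)
  (g0 : K) (terms : seq (K * seq E1)) :
  (forall t, t \in terms -> t.2 <> [::]) ->
  eqv s r cl S (x_elt v0 g0 terms) (emb v0 ((g0, [::]) :: terms)).
Proof.
move=> Hne; rewrite /x_elt /emb /=.
apply: (@eqv_cat K E0 E1 s r Cty cl S [:: _] [:: _]); first exact: eqv_refl.
apply: eqv_map => t tT /=; apply: weq_scale; apply: (mw_mv K r cl S s_v0).
by apply/eqP; apply: Hne.
Qed.

Definition Mx (E1 : countType) (b : E1 -> nat) (F : seq E1) :=
  foldr (fun e m => maxn (b e) m) 0%N F.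

Lemma Mx_ge (E1 : countType) (b : E1 -> nat) F e : e \in F -> (b e <= Mx b F)%N.
Proof.
elim: F => //= h F IH; rewrite inE leq_max => /orP [/eqP ->|/IH ->].
  by rewrite leqnn. by rewrite orbT.
Qed.

Lemma Mx_lt (E1 : countType) (b : E1 -> nat) F k : (k < Mx b F)%N ->
  exists2 e, e \in F & (k < b e)%N.
Proof.
elim: F => //= h F IH; rewrite leq_max => /orP [H|/IH [e eF He]].
  by exists h; rewrite ?inE ?eqxx.
by exists e; rewrite // inE eF orbT.
Qed.

Unset Implicit Arguments.
Theorem lemma4p2
  (K : fieldType) (E0 E1 : countType) (s r : E1 -> E0)
  (Cty : Type) (cl : E1 -> Cty) (S : Cty -> Prop) (v0 : E0)
  (* the separated graph (E,C): C = the fibres of cl, blocks nonempty,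
     each block inside some s^{-1}(v) *)
  (cl_surj : forall Y, exists e, cl e = Y)
  (cl_src : forall e f, cl e = cl f -> s e = s f)
  (* all edges have source v0; r injective *)
  (s_v0 : forall e, s e = v0)
  (r_inj : injective r)
  (* S is a set of finite blocks *)
  (S_fin : forall Y, S Y -> exists l : seq E1, forall e, (e \in l) <-> cl e = Y)
  (* the branching system of the construction *)
  (idx : E0 -> nat) (idx_inj : injective idx)
  (idx_enum : forall v i, (i < idx v)%N -> exists w, idx w = i)
  (cidx : Cty -> nat) (cidx_inj : injective cidx)
  (cidx_pos : forall Y, (0 < cidx Y)%N)
  (cidx_enum : forall Y i, (0 < i)%N -> (i < cidx Y)%N -> exists Z, cidx Z = i)
  (cell : seq (option E1) -> R * R)
  (Hcell : nested_partition cl S v0 idx cidx cell)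
  (piece : E1 -> seq (option E1) -> R * R) (f g : E1 -> R -> R)
  (Hf : edge_maps r cl S idx cidx cell piece f g)
  (* the element x *)
  (g0 : K) (terms : seq (K * seq E1))
  (terms_ne : forall t, t \in terms -> t.2 <> [::])
  (x_nz : AL_nonzero s r cl S (x_elt v0 g0 terms)) :
  pi_elt r cl S idx cidx cell f g (x_elt v0 g0 terms) <> (fun _ _ => 0%R).
Proof.
move=> Hpi.
set x := (g0, [::]) :: terms.
set F := flatten [seq t.2 | t <- x].
have Hs : all (fun t => all (fun f => f \in F) t.2) x.
  apply/allP => t tx; apply/allP => e et; apply/flattenP; exists t.2 => //.
  by apply/mapP; exists t.
have HP : forall c, validc cl S cidx c -> Phi cl cidx c x = 0.
  move=> c Hc.
  set M := Mx (fun e => cidx (cl e)) F.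
  set a := mkseq (fun i => c i.+1) M.
  have Ha : validAddr cl S cidx a.
    move=> k; rewrite size_mkseq => kM; rewrite nth_mkseq //; apply: Hc.
    have [e eF He] := Mx_lt kM.
    move: He; rewrite leq_eqVlt => /orP [/eqP Ek|He]; first by exists (cl e); rewrite Ek.
    by apply: (cidx_enum (cl e)).  
  set y := fst (cell a).
  have Hy : Ico (cell a) y := conj (Rle_refl _) (cell_ne Hcell Ha).
  have := congr1 (fun G => G (fun _ => (1 : K)) y) Hpi.
  rewrite /= /pi_elt big_cons big_map /=.
  rewrite (pdecT (P := Ico (Dv idx v0) y)); last first.
    by have := cell_take Hcell 0 Ha Hy; rewrite take0 Hcell.1.
  rewrite mulr1 => H0; rewrite -[RHS]H0 /Phi big_cons /= mulr1; congr (_ + _).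
  apply: eq_big_seq => t tT; rewrite (piw_flat Hf); congr (_ * _%:R).
  rewrite /sem; symmetry; congr nat_of_bool; apply: eq_in_all => e et.
  have eF : e \in F.
    apply/flattenP; exists t.2 => //; apply/mapP; exists t => //.
    by rewrite inE tT orbT.
  have Hk : (cidx (cl e) <= size a)%N.
    by rewrite size_mkseq; apply: (Mx_ge (fun e => cidx (cl e)) eF).
  have HR := Rset_addr cidx_pos Hcell Ha Hy Hk.
  rewrite nth_mkseq in HR; last by rewrite prednK ?cidx_pos // -(size_mkseq (fun i => c i.+1) M).
  rewrite prednK ?cidx_pos // in HR.
  rewrite /blk; case: eqP => [/HR/pdecT //|ne].
  by apply: pdecF => /HR.
have HI := main_alg r s_v0 cl_surj cidx_inj S_fin Hs HP.
apply: x_nz. have H1 := xelt_eqv r cl S s_v0 g0 terms_ne. exact: (eqv_I H1 HI).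
Qed.
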